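(* Let $0<q<1$, $N$ a positive integer, $n\in\{0,1,\dots,N\}$, and $\gamma\in\mathbb{C}$ with $\gamma q,\gamma q^2,\gamma q^3\notin\{q^{-j}:j\in\mathbb{Z}_{\ge0}\}$. Then $${}_4\phi_3\!\left(\begin{matrix}q^{-2n-1},q^{-2(N-n)},q^{-x},-\gamma q^{x+1}\\ q^{-N},-q^{-N},\gamma q\end{matrix};q,q\right)=\frac{q^{-x}-\gamma q^{x+1}}{1-\gamma q}\;{}_4\phi_3\!\left(\begin{matrix}q^{-2n},q^{2n-2N+1},q^{-2x},\gamma^2q^{2x+2}\\ q^{-2N},\gamma q^2,\gamma q^3\end{matrix};q^2,q^2\right)$$ holds for all $x\in\mathbb{C}$ if $2n+1\le N$, and holds for $x\in\{0,1,\dots,N\}$ if $2n+1>N$.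
   Context: $(x;q)_k=\prod_{j=0}^{k-1}(1-xq^j)$. A terminating ${}_4\phi_3\!\left(\begin{matrix}a_1,\dots,a_4\\ b_1,b_2,b_3\end{matrix};p,p\right)$ (base $p$, here $p=q$ or $p=q^2$) means $\sum_{k=0}^K\frac{(a_1,\dots,a_4;p)_k}{(b_1,b_2,b_3,p;p)_k}p^k$, where $K$ is the smallest nonnegative integer such that some numerator parameter $a_i$ equals $p^{-K}$ (the sum is truncated at the first numerator parameter that causes termination). *)

(* Defs.v *)
From HB Require Import structures.
From mathcomp Require Import all_boot all_order all_algebra.
Set Implicit Arguments. Unset Strict Implicit. Unset Printing Implicit Defensive.
Import Order.TTheory GRing.Theory Num.Theory.
Local Open Scope ring_scope.

Definition qpoch (R : numClosedFieldType) (x q : R) (k : nat) : R :=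
  \prod_(j < k) (1 - x * q ^+ j).

(* Termination index: smallest K < fuel such that some numerator parameter
   equals p^{-K} (returns fuel if none is found below fuel). *)
Definition term_index (R : numClosedFieldType) (p : R) (a : seq R) (fuel : nat) : nat :=
  find (fun k => has (fun c => c == p ^- k) a) (iota 0 fuel).

(* Terminating 4phi3 with base p, argument p, truncated at the termination
   index K (sum over k = 0..K). *)
Definition phi43 (R : numClosedFieldType) (p a1 a2 a3 a4 b1 b2 b3 : R)
    (fuel : nat) : R :=
  let K := term_index p [:: a1; a2; a3; a4] fuel in
  \sum_(k < K.+1)
    (qpoch a1 p k * qpoch a2 p k * qpoch a3 p k * qpoch a4 p k)
    / (qpoch b1 p k * qpoch b2 p k * qpoch b3 p k * qpoch p p k) * p ^+ k.

(* Main.v *)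
Require Import Defs.
From HB Require Import structures.
From mathcomp Require Import all_boot all_order all_algebra.
From mathcomp Require Import ring zify.
From Stdlib Require Import Lia.
Import Order.TTheory GRing.Theory Num.Theory.
Local Open Scope ring_scope.
Set Implicit Arguments. Unset Strict Implicit.
Lemma shift_sum (R : fieldType) (e D F G bt rh d : nat -> R) (u : R) (B : nat) :
  (forall k, e k.+1 = e k * (bt k - rh k * u)) ->
  (forall k, rh k != 0) ->
  (forall k, D k.+1 = D k * d k) ->
  (forall k, (k <= B)%N -> e k != 0 -> D k != 0) ->
  (F B = 0 \/ e B.+1 = 0) ->
  F 0%N * bt 0%N / rh 0%N = G 0%N ->
  (forall k, F k.+1 * bt k.+1 / rh k.+1 - F k * d k / rh k = G k.+1) ->
  u * \sum_(k < B.+1) F k / D k * e k = \sum_(k < B.+1) G k / D k * e k.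
Proof.
move=> he hr hD hDe hB h0 hS.
pose H k := if k is k'.+1 then F k' / (D k' * rh k') * e k else 0.
have step : forall k, (k <= B)%N ->
  u * (F k / D k * e k) = G k / D k * e k - (H k.+1 - H k).
  move=> k kB; have [ek0|ekn] := eqVneq (e k) 0.
    case: k kB ek0 => [|k] kB ek0.
      by rewrite /H (he 0%N) ek0 !mul0r !mulr0 !subr0.
    by rewrite /H (he k.+1) ek0 !mul0r !mulr0 !subr0.
  have Dk := hDe k kB ekn.
  case: k kB ekn Dk => [|k] kB ekn Dk.
    rewrite /H he -h0 subr0.
    have := hr 0%N; move=> r0.
    field; by rewrite Dk r0.
  rewrite /H (he k.+1) -hS.
  have Dk' : D k != 0 by move: Dk; rewrite hD mulf_eq0 negb_or => /andP[].
  have dk : d k != 0 by move: Dk; rewrite hD mulf_eq0 negb_or => /andP[].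
  rewrite hD.
  have r1 := hr k.+1; have r0 := hr k.
  field; by rewrite Dk' dk r1 r0.
rewrite mulr_sumr.
rewrite (eq_bigr (fun k : 'I_B.+1 => G k / D k * e k - (H k.+1 - H k))); last first.
  by move=> i _; apply: step; rewrite -ltnS.
rewrite sumrB -(big_mkord (fun _ => true) (fun k => H k.+1 - H k)).
rewrite telescope_sumr // /H /=.
suff -> : F B / (D B * rh B) * e B.+1 = 0 by rewrite !subr0.
by case: hB => ->; rewrite ?mul0r ?mulr0.
Qed.

Lemma eq0_of (R : fieldType) (x y : R) : x = y -> x - y = 0.
Proof. by move=> ->; rewrite subrr. Qed.

Lemma induct (R : fieldType) (P Q : nat -> R) (u c c0 : R) (al de : nat -> R) (n0 : nat) :
  P 1%N = c * Q 0%N ->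
  u * P 0%N = c0 * P 1%N ->
  (forall m, (0 < m)%N -> (m <= 2 * n0)%N -> u * P m = al m * P m.+1 + de m * P m.-1) ->
  ((0 < n0)%N -> u^+2 * Q 0%N = al 1%N * al 2%N * Q 1%N + (al 1%N * de 2%N + de 1%N * c0) * Q 0%N) ->
  (forall n, (0 < n)%N -> (n < n0)%N -> u^+2 * Q n = al ((2*n).+1)%N * al ((2*n).+2)%N * Q n.+1
      + (al ((2*n).+1)%N * de ((2*n).+2)%N + de ((2*n).+1)%N * al (2*n)%N) * Q n + de ((2*n).+1)%N * de (2*n)%N * Q n.-1) ->
  (forall n, (n < n0)%N -> al ((2*n).+1)%N * al ((2*n).+2)%N != 0) ->
  forall n, (n <= n0)%N -> P ((2*n).+1)%N = c * Q n.
Proof.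
move=> hP1 hu0 hP hQ0 hQ hnz.
elim/ltn_ind => n IH hn.
case: n IH hn => [|n] IH hn; first exact: hP1.
have nn0 : (n < n0)%N by [].
apply: (mulfI (hnz n nn0)).
apply/eqP; rewrite -subr_eq0; apply/eqP.
have l1 : ((2*n).+1 <= 2 * n0)%N by lia.
have l2 : ((2*n).+2 <= 2 * n0)%N by lia.
have ha := eq0_of (hP ((2*n).+1)%N isT l1).
have hb := eq0_of (hP ((2*n).+2)%N isT l2).
have h1 := eq0_of (IH n (ltnSn n) (ltnW hn)).
case: n IH hn nn0 l1 l2 ha hb h1 => [|n] IH hn nn0 l1 l2 ha hb h1.
  have hq := eq0_of (hQ0 nn0).
  have hu := eq0_of hu0.
  rewrite /= in ha hb h1 *.
  set A1 := (X in X = 0) in ha; set A2 := (X in X = 0) in hb;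
  set A3 := (X in X = 0) in h1; set A4 := (X in X = 0) in hq; set A5 := (X in X = 0) in hu.
  have -> : al 1%N * al 2%N * P 3%N - al 1%N * al 2%N * (c * Q 1%N) =
     - al 1%N * A2 - u * A1 - de 1%N * A5 + (u^+2 - (al 1%N * de 2%N + de 1%N * c0)) * A3
     + c * A4.
    rewrite /A1 /A2 /A3 /A4 /A5; ring.
  by rewrite ha hb h1 hq hu; ring.
have hc := eq0_of (hP (2*n.+1)%N isT (leq_trans (leqnSn _) l1)).
have h2 := eq0_of (IH n (ltnW (ltnSn n.+1)) (ltnW (ltnW hn))).
have hq := eq0_of (hQ n.+1 isT nn0).
rewrite !mulnS !add2n /= in ha hb hc h1 h2 hq *.
set A1 := (X in X = 0) in ha; set A2 := (X in X = 0) in hb; set A0 := (X in X = 0) in hc;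
set A3 := (X in X = 0) in h1; set A4 := (X in X = 0) in hq; set A6 := (X in X = 0) in h2.
have -> : al (2*n).+3 * al (2*n).+4 * P (2*n).+4.+1 - al (2*n).+3 * al (2*n).+4 * (c * Q n.+2) =
   - al (2*n).+3 * A2 - u * A1 - de (2*n).+3 * A0
   + (u^+2 - (al (2*n).+3 * de (2*n).+4 + de (2*n).+3 * al (2*n).+2)) * A3
   - de (2*n).+3 * de (2*n).+2 * A6 + c * A4.
  rewrite /A0 /A1 /A2 /A3 /A4 /A6; ring.
by rewrite ha hb hc h1 h2 hq; ring.
Qed.

Lemma qp0 (R : numClosedFieldType) (x p : R) : qpoch x p 0 = 1.
Proof. by rewrite /qpoch big_ord0. Qed.

Lemma qpS (R : numClosedFieldType) (x p : R) k : qpoch x p k.+1 = qpoch x p k * (1 - x * p ^+ k).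
Proof. by rewrite /qpoch big_ord_recr. Qed.

Lemma qpSl (R : numClosedFieldType) (x p : R) k : qpoch x p k.+1 = (1 - x) * qpoch (x * p) p k.
Proof.
rewrite /qpoch big_ord_recl expr0 mulr1; congr (_ * _).
by apply: eq_bigr => i _; rewrite /bump /= exprS mulrA.
Qed.

Lemma qp1 (R : numClosedFieldType) (x p : R) : qpoch x p 1 = 1 - x.
Proof. by rewrite qpS qp0 mul1r expr0 mulr1. Qed.

Lemma qp2 (R : numClosedFieldType) (t p : R) i :
  qpoch t p i.+2 = (1 - t) * (1 - t * p) * qpoch (t * p * p) p i.
Proof. by rewrite qpSl qpSl mulrA. Qed.
Lemma qp2b (R : numClosedFieldType) (t p : R) i :
  qpoch (t * p) p i.+2 = (1 - t * p) * qpoch (t * p * p) p i * (1 - t * p * p * p ^+ i).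
Proof. by rewrite qpSl qpS mulrA. Qed.
Lemma qp2c (R : numClosedFieldType) (t p : R) i :
  qpoch (t * p * p) p i.+2 = qpoch (t * p * p) p i * (1 - t * p * p * p ^+ i) * (1 - t * p * p * p ^+ i.+1).
Proof. by rewrite qpS qpS. Qed.
Lemma qp1b (R : numClosedFieldType) (t p : R) i :
  qpoch (t * p) p i.+1 = (1 - t * p) * qpoch (t * p * p) p i.
Proof. by rewrite qpSl. Qed.

Lemma invS (R : numClosedFieldType) (x : R) n : x != 0 -> x ^- n = x ^- n.+1 * x.
Proof. move=> hx; rewrite exprS; field; by rewrite hx expf_neq0. Qed.

Definition NN (R : numClosedFieldType) (q a : R) (m k : nat) :=
  qpoch (q ^- m) q k * qpoch (a * a * q ^+ m / q) q k * q ^+ k.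
Definition alq (R : numClosedFieldType) (q g a : R) (m : nat) :=
  (1 - a * a * q ^+ m / q) * (1 - g * q ^+ m.+1) / (1 - a * a * (q ^+ m * q ^+ m) / q).
Definition deq (R : numClosedFieldType) (q g a : R) (m : nat) := (1 - g * q) - alq q g a m.
Definition btq (R : numClosedFieldType) (q g : R) (k : nat) := 1 - g * q * (q ^+ k * q ^+ k).
Definition dP (R : numClosedFieldType) (q g a : R) (k : nat) :=
  (1 - a * q ^+ k) * (1 - (- a) * q ^+ k) * (1 - g * q * q ^+ k) * (1 - q * q ^+ k).

Definition MM (R : numClosedFieldType) (q a : R) (n k : nat) :=
  qpoch ((q ^+ 2) ^- n) (q ^+ 2) k * qpoch (a * a * (q ^+ 2) ^+ n * q) (q ^+ 2) k * (q ^+ 2) ^+ k.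
Definition dQ (R : numClosedFieldType) (q g a : R) (k : nat) :=
  (1 - a * a * (q ^+ 2) ^+ k) * (1 - g * q ^+ 2 * (q ^+ 2) ^+ k) * (1 - g * q ^+ 3 * (q ^+ 2) ^+ k)
  * (1 - q ^+ 2 * (q ^+ 2) ^+ k).

Lemma e2 (R : numClosedFieldType) (x : R) n : x ^+ (2 * n) = x ^+ n * x ^+ n.
Proof. by rewrite mul2n -addnn exprD. Qed.
Lemma p2 (R : numClosedFieldType) (x : R) n : (x ^+ 2) ^+ n = x ^+ n * x ^+ n.
Proof. by rewrite -exprM e2. Qed.

Lemma neq_by (R : numClosedFieldType) (x y : R) : y != 0 -> x = y -> x != 0.
Proof. by move=> h ->. Qed.

Lemma Qk (R : numClosedFieldType) (q g a : R) (n k : nat) :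
  q != 0 -> (forall j, 1 - a * a * (q * q ^+ j * q ^+ j) != 0) ->
  MM q a n.+1 k.+1 * btq q g k.+1 ^+ 2 / (q ^+ 2) ^+ k.+1 - MM q a n.+1 k * dQ q g a k / (q ^+ 2) ^+ k
  = alq q g a ((2 * n.+1).+1)%N * alq q g a ((2 * n.+1).+2)%N * MM q a n.+2 k.+1
    + (alq q g a ((2 * n.+1).+1)%N * deq q g a ((2 * n.+1).+2)%N
       + deq q g a ((2 * n.+1).+1)%N * alq q g a (2 * n.+1)%N) * MM q a n.+1 k.+1
    + deq q g a ((2 * n.+1).+1)%N * deq q g a (2 * n.+1)%N * MM q a n k.+1.
Proof.
move=> hq hA.
have h1 : 1 - a * a * (q * (q ^+ n * q ^+ n) * (q * (q * (q ^+ n * q ^+ n)))) != 0.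
  apply: (neq_by (hA (2 * n).+1)%N); rewrite exprS e2; ring.
have h2 : 1 - a * a * (q * (q * (q ^+ n * q ^+ n)) * (q * (q * (q * (q ^+ n * q ^+ n))))) != 0.
  apply: (neq_by (hA (2 * n).+2)%N); rewrite !exprS e2; ring.
have h3 : 1 - a * a * (q * (q * (q * (q ^+ n * q ^+ n))) * (q * (q * (q * (q * (q ^+ n * q ^+ n)))))) != 0.
  apply: (neq_by (hA (2 * n).+3)%N); rewrite !exprS e2; ring.
have hp : q ^+ 2 != 0 by rewrite expf_neq0.
have e1 : (q ^+ 2) ^- n.+1 = (q ^+ 2) ^- n.+2 * q ^+ 2 by apply: invS.
have e0 : (q ^+ 2) ^- n = (q ^+ 2) ^- n.+2 * q ^+ 2 * q ^+ 2 by rewrite -e1; apply: invS.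
have f1 : a * a * (q ^+ 2) ^+ n.+1 * q = a * a * (q ^+ 2) ^+ n * q * q ^+ 2 by rewrite exprS; ring.
have f2 : a * a * (q ^+ 2) ^+ n.+2 * q = a * a * (q ^+ 2) ^+ n * q * q ^+ 2 * q ^+ 2 by rewrite !exprS; ring.
rewrite /MM e1 e0 f1 f2.
set p := q ^+ 2.
set t := p ^- n.+2; set s := a * a * p ^+ n * q.
rewrite !mulnS !add2n.
case: k => [|i].
  rewrite !qp1 !qp0 /t /s /p /deq /alq /btq /dQ !p2 !exprS !expr0 !e2.
  field; by rewrite hq h1 h2 h3 ?expf_neq0.
rewrite (qp2b t) (qp2b s) (qp1b t) (qp1b s) (qp2c t) (qp2c s) (qp2 t) (qp2 s).
set X := qpoch (t * p * p) p i; set Y := qpoch (s * p * p) p i.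
rewrite /t /s /p /deq /alq /btq /dQ !p2 !exprS !expr0 !e2.
field; by rewrite hq h1 h2 h3 !expf_neq0.
Qed.

Lemma Qk_0 (R : numClosedFieldType) (q g a : R) (n : nat) :
  q != 0 -> (forall j, 1 - a * a * (q * q ^+ j * q ^+ j) != 0) ->
  MM q a n.+1 0 * btq q g 0 ^+ 2 / (q ^+ 2) ^+ 0
  = alq q g a ((2 * n.+1).+1)%N * alq q g a ((2 * n.+1).+2)%N * MM q a n.+2 0
    + (alq q g a ((2 * n.+1).+1)%N * deq q g a ((2 * n.+1).+2)%N
       + deq q g a ((2 * n.+1).+1)%N * alq q g a (2 * n.+1)%N) * MM q a n.+1 0
    + deq q g a ((2 * n.+1).+1)%N * deq q g a (2 * n.+1)%N * MM q a n 0.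
Proof.
move=> hq hA.
have h1 : 1 - a * a * (q * (q ^+ n * q ^+ n) * (q * (q * (q ^+ n * q ^+ n)))) != 0.
  apply: (neq_by (hA (2 * n).+1)%N); rewrite exprS e2; ring.
have h2 : 1 - a * a * (q * (q * (q ^+ n * q ^+ n)) * (q * (q * (q * (q ^+ n * q ^+ n))))) != 0.
  apply: (neq_by (hA (2 * n).+2)%N); rewrite !exprS e2; ring.
have h3 : 1 - a * a * (q * (q * (q * (q ^+ n * q ^+ n))) * (q * (q * (q * (q * (q ^+ n * q ^+ n)))))) != 0.
  apply: (neq_by (hA (2 * n).+3)%N); rewrite !exprS e2; ring.
rewrite /MM !qp0 !mulnS !add2n /deq /alq /btq !p2 !exprS !expr0 !e2.
field; by rewrite hq h1 h2 h3 ?expf_neq0.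
Qed.

Lemma qp_one0 (R : numClosedFieldType) (p : R) k : qpoch 1 p k.+1 = 0.
Proof. by rewrite qpSl subrr mul0r. Qed.

Lemma qp_inv0 (R : numClosedFieldType) (p : R) k : p != 0 -> qpoch (p ^-1) p k.+2 = 0.
Proof. by move=> hp; rewrite qpSl qpSl mulVf // subrr mul0r mulr0. Qed.

Lemma Qk0 (R : numClosedFieldType) (q g a : R) (k : nat) :
  q != 0 -> (forall j, 1 - a * a * (q * q ^+ j * q ^+ j) != 0) ->
  MM q a 0 k.+1 * btq q g k.+1 ^+ 2 / (q ^+ 2) ^+ k.+1 - MM q a 0 k * dQ q g a k / (q ^+ 2) ^+ k
  = alq q g a 1%N * alq q g a 2%N * MM q a 1 k.+1
    + (alq q g a 1%N * deq q g a 2%N + deq q g a 1%N * (1 - g * q)) * MM q a 0 k.+1.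
Proof.
move=> hq hA.
have hp : q ^+ 2 != 0 by rewrite expf_neq0.
have m0 : forall j, MM q a 0 j.+1 = 0 by move=> j; rewrite /MM expr0 invr1 qp_one0 !mul0r.
rewrite !m0 !mulr0 !mul0r addr0 sub0r.
case: k => [|i].
  have h1 : 1 - a * a * q != 0 by apply: (neq_by (hA 0%N)); rewrite !expr0; ring.
  have h2 : 1 - a * a * (q * (q * q)) != 0 by apply: (neq_by (hA 1%N)); rewrite !expr1; ring.
  rewrite /MM !qp1 !qp0 /deq /alq /dQ !exprS !expr0 ?invr1.
  field; by rewrite hq h1 h2.
by rewrite m0 /MM !expr1 qp_inv0 // !(mul0r, mulr0, oppr0).
Qed.

Lemma Pk (R : numClosedFieldType) (q g a : R) (m k : nat) :
  q != 0 -> 1 - a * a * (q ^+ m * (q * q ^+ m)) != 0 ->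
  NN q a m.+1 k.+1 * btq q g k.+1 / q ^+ k.+1 - NN q a m.+1 k * dP q g a k / q ^+ k
  = alq q g a m.+1 * NN q a m.+2 k.+1 + deq q g a m.+1 * NN q a m k.+1.
Proof.
move=> hq hd.
have e1 : q ^- m.+1 = q ^- m.+2 * q by apply: invS.
have e0 : q ^- m = q ^- m.+2 * q * q by rewrite -e1; apply: invS.
have f1 : a * a * q ^+ m.+1 / q = a * a * q ^+ m / q * q by rewrite exprS; field.
have f2 : a * a * q ^+ m.+2 / q = a * a * q ^+ m / q * q * q by rewrite !exprS; field.
rewrite /NN e1 e0 f1 f2.
set t := q ^- m.+2; set s := a * a * q ^+ m / q.
case: k => [|i].
  rewrite !qp1 !qp0 /t /s /deq /alq /btq /dP.
  rewrite !exprS !expr0.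
  field; by rewrite hq hd expf_neq0.
rewrite (qp2b t) (qp2b s) (qp1b t) (qp1b s) (qp2c t) (qp2c s) (qp2 t) (qp2 s).
set X := qpoch (t * q * q) q i; set Y := qpoch (s * q * q) q i.
rewrite /t /s /deq /alq /btq /dP !exprS.
field; by rewrite hq hd !expf_neq0.
Qed.


Definition ee (R : numClosedFieldType) (q g z : R) k := qpoch z q k * qpoch (- g * q / z) q k.
Definition DD (R : numClosedFieldType) (q g a : R) k :=
  qpoch a q k * qpoch (- a) q k * qpoch (g * q) q k * qpoch q q k.
Definition PP (R : numClosedFieldType) (q g a z : R) (N m : nat) :=
  \sum_(k < N.+1) NN q a m k / DD q g a k * ee q g z k.
Definition ff (R : numClosedFieldType) (q g z : R) k :=
  qpoch (z ^+ 2) (q ^+ 2) k * qpoch (g ^+ 2 * q ^+ 2 / z ^+ 2) (q ^+ 2) k.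
Definition EE (R : numClosedFieldType) (q g a : R) k :=
  qpoch (a * a) (q ^+ 2) k * qpoch (g * q ^+ 2) (q ^+ 2) k * qpoch (g * q ^+ 3) (q ^+ 2) k
  * qpoch (q ^+ 2) (q ^+ 2) k.
Definition QQ (R : numClosedFieldType) (q g a z : R) (N n : nat) :=
  \sum_(k < N.+1) MM q a n k / EE q g a k * ff q g z k.

Lemma ee_S (R : numClosedFieldType) (q g z : R) k : z != 0 ->
  ee q g z k.+1 = ee q g z k * (btq q g k - q ^+ k * (z - g * q / z)).
Proof. move=> hz; rewrite /ee !qpS /btq; field; exact: hz. Qed.

Lemma ff_S (R : numClosedFieldType) (q g z : R) k : z != 0 ->
  ff q g z k.+1 = ff q g z k * (btq q g k ^+ 2 - (q ^+ 2) ^+ k * (z - g * q / z) ^+ 2).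
Proof. move=> hz; rewrite /ff !qpS /btq p2; field; exact: hz. Qed.

Lemma DD_S (R : numClosedFieldType) (q g a : R) k : DD q g a k.+1 = DD q g a k * dP q g a k.
Proof. rewrite /DD /dP !qpS; ring. Qed.

Lemma EE_S (R : numClosedFieldType) (q g a : R) k : EE q g a k.+1 = EE q g a k * dQ q g a k.
Proof. rewrite /EE /dQ !qpS; ring. Qed.

Lemma P_rec (R : numClosedFieldType) (q g a z : R) (N m : nat) :
  q != 0 -> z != 0 -> 1 - a * a * (q ^+ m * (q * q ^+ m)) != 0 ->
  (forall k, (k <= N)%N -> DD q g a k != 0) ->
  (NN q a m.+1 N = 0 \/ ee q g z N.+1 = 0) ->
  (z - g * q / z) * PP q g a z N m.+1
  = alq q g a m.+1 * PP q g a z N m.+2 + deq q g a m.+1 * PP q g a z N m.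
Proof.
move=> hq hz hd hD hB.
rewrite /PP (@shift_sum _ (ee q g z) (DD q g a) (NN q a m.+1)
  (fun k => alq q g a m.+1 * NN q a m.+2 k + deq q g a m.+1 * NN q a m k)
  (btq q g) (fun k => q ^+ k) (dP q g a)).
- rewrite !mulr_sumr -big_split; apply: eq_bigr => k _ /=.
  by rewrite !mulrDl !mulrA.
- by move=> k; apply: ee_S.
- by move=> k; apply: expf_neq0.
- by move=> k; apply: DD_S.
- by move=> k kN _; apply: hD.
- exact: hB.
- by rewrite /NN !qp0 /btq !expr0 divr1 /deq; ring.
- by move=> k; apply: Pk.
Qed.

Lemma Q_rec (R : numClosedFieldType) (q g a z : R) (N n : nat) :
  q != 0 -> z != 0 -> (forall j, 1 - a * a * (q * q ^+ j * q ^+ j) != 0) ->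
  (forall k, (k <= N)%N -> EE q g a k != 0) ->
  (MM q a n.+1 N = 0 \/ ff q g z N.+1 = 0) ->
  (z - g * q / z) ^+ 2 * QQ q g a z N n.+1
  = alq q g a ((2 * n.+1).+1)%N * alq q g a ((2 * n.+1).+2)%N * QQ q g a z N n.+2
    + (alq q g a ((2 * n.+1).+1)%N * deq q g a ((2 * n.+1).+2)%N
       + deq q g a ((2 * n.+1).+1)%N * alq q g a (2 * n.+1)%N) * QQ q g a z N n.+1
    + deq q g a ((2 * n.+1).+1)%N * deq q g a (2 * n.+1)%N * QQ q g a z N n.
Proof.
move=> hq hz hA hE hB.
rewrite /QQ (@shift_sum _ (ff q g z) (EE q g a) (MM q a n.+1)
  (fun k => alq q g a ((2 * n.+1).+1)%N * alq q g a ((2 * n.+1).+2)%N * MM q a n.+2 k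
    + (alq q g a ((2 * n.+1).+1)%N * deq q g a ((2 * n.+1).+2)%N
       + deq q g a ((2 * n.+1).+1)%N * alq q g a (2 * n.+1)%N) * MM q a n.+1 k
    + deq q g a ((2 * n.+1).+1)%N * deq q g a (2 * n.+1)%N * MM q a n k)
  (fun k => btq q g k ^+ 2) (fun k => (q ^+ 2) ^+ k) (dQ q g a)).
- rewrite !mulr_sumr -!big_split; apply: eq_bigr => k _ /=.
  by rewrite !mulrDl !mulrA.
- by move=> k; apply: ff_S.
- by move=> k; apply: expf_neq0; apply: expf_neq0.
- by move=> k; apply: EE_S.
- by move=> k kN _; apply: hE.
- exact: hB.
- exact: Qk_0.
- by move=> k; apply: Qk.
Qed.

Lemma Q_rec0 (R : numClosedFieldType) (q g a z : R) (N : nat) :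
  q != 0 -> z != 0 -> (forall j, 1 - a * a * (q * q ^+ j * q ^+ j) != 0) ->
  (forall k, (k <= N)%N -> EE q g a k != 0) ->
  (MM q a 0 N = 0 \/ ff q g z N.+1 = 0) ->
  (z - g * q / z) ^+ 2 * QQ q g a z N 0
  = alq q g a 1%N * alq q g a 2%N * QQ q g a z N 1
    + (alq q g a 1%N * deq q g a 2%N + deq q g a 1%N * (1 - g * q)) * QQ q g a z N 0.
Proof.
move=> hq hz hA hE hB.
rewrite /QQ (@shift_sum _ (ff q g z) (EE q g a) (MM q a 0)
  (fun k => alq q g a 1%N * alq q g a 2%N * MM q a 1 k
    + (alq q g a 1%N * deq q g a 2%N + deq q g a 1%N * (1 - g * q)) * MM q a 0 k)
  (fun k => btq q g k ^+ 2) (fun k => (q ^+ 2) ^+ k) (dQ q g a)).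
- rewrite !mulr_sumr -!big_split; apply: eq_bigr => k _ /=.
  by rewrite !mulrDl !mulrA.
- by move=> k; apply: ff_S.
- by move=> k; apply: expf_neq0; apply: expf_neq0.
- by move=> k; apply: EE_S.
- by move=> k kN _; apply: hE.
- exact: hB.
- have h1 : 1 - a * a * q != 0 by apply: (neq_by (hA 0%N)); rewrite !expr0; ring.
  have h2 : 1 - a * a * (q * (q * q)) != 0 by apply: (neq_by (hA 1%N)); rewrite !expr1; ring.
  rewrite /MM !qp0 /btq /deq /alq !exprS !expr0 ?invr1.
  field; by rewrite hq h1 h2.
- by move=> k; apply: Qk0.
Qed.

Lemma PP0 (R : numClosedFieldType) (q g a z : R) (N : nat) : PP q g a z N 0 = 1.
Proof.
rewrite /PP big_ord_recl big1 ?addr0.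
  by rewrite /NN /DD /ee !qp0 !expr0; field.
by move=> i _; rewrite /NN /= expr0 invr1 qp_one0 !mul0r.
Qed.

Lemma QQ0 (R : numClosedFieldType) (q g a z : R) (N : nat) : QQ q g a z N 0 = 1.
Proof.
rewrite /QQ big_ord_recl big1 ?addr0.
  by rewrite /MM /EE /ff !qp0 !expr0; field.
by move=> i _; rewrite /MM /= expr0 invr1 qp_one0 !mul0r.
Qed.

Lemma PP1 (R : numClosedFieldType) (q g a z : R) (N : nat) :
  q != 0 -> z != 0 -> 1 - a != 0 -> 1 - - a != 0 -> 1 - g * q != 0 -> 1 - q != 0 -> (0 < N)%N ->
  PP q g a z N 1 = (z - g * q / z) / (1 - g * q).
Proof.
move=> hq hz h1 h2 h3 h4; case: N => [//|N] _.
rewrite /PP big_ord_recl big_ord_recl big1 ?addr0.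
  rewrite /NN /DD /ee /= !qp0 !qp1 !expr0 !expr1.
  field; by rewrite hq hz h1 h2 h3 h4.
by move=> i _; rewrite /NN /= expr1 qp_inv0 // !mul0r.
Qed.

Lemma qpoch_zero (R : numClosedFieldType) (p : R) K k : p != 0 -> (K < k)%N -> qpoch (p ^- K) p k = 0.
Proof.
move=> hp hK; rewrite /qpoch; apply/eqP; rewrite prodf_seq_eq0; apply/hasP.
exists (Ordinal hK); first by rewrite mem_index_enum.
by rewrite /= mulVf ?subrr // expf_neq0.
Qed.

Lemma term_index_spec (R : numClosedFieldType) (p : R) (s : seq R) fuel j :
  (j < fuel)%N -> has (fun c => c == p ^- j) s ->
  (term_index p s fuel <= j)%N /\ has (fun c => c == p ^- (term_index p s fuel)) s.
Proof.
move=> hj hs; rewrite /term_index.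
set P := fun k : nat => has (fun c => c == p ^- k) s.
have hP : has P (iota 0 fuel).
  by apply/hasP; exists j; rewrite ?mem_iota //.
have hlt := hP; rewrite has_find size_iota in hlt.
split.
  rewrite leqNgt; apply/negP => hjK.
  have := before_find 0%N hjK; rewrite nth_iota // add0n.
  by rewrite /P hs.
have := nth_find 0%N hP; rewrite nth_iota // add0n.
Qed.

Lemma sum_ext_zero (R : numClosedFieldType) (F : nat -> R) K N :
  (K <= N)%N -> (forall k, (K < k)%N -> F k = 0) ->
  \sum_(k < K.+1) F k = \sum_(k < N.+1) F k.
Proof.
move=> KN hF.
rewrite -!(big_mkord (fun _ => true)) (@big_cat_nat _ _ _ K.+1 0 N.+1) //=.
rewrite [X in _ + X]big1_seq; first by rewrite addr0.
move=> k /andP[_]; rewrite mem_index_iota => /andP[hk _].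
exact: hF.
Qed.

Lemma phi43_sum (R : numClosedFieldType) (p a1 a2 a3 a4 b1 b2 b3 : R) fuel N j :
  p != 0 -> (j <= N)%N -> (j < fuel)%N -> has (fun c => c == p ^- j) [:: a1; a2; a3; a4] ->
  phi43 p a1 a2 a3 a4 b1 b2 b3 fuel = \sum_(k < N.+1)
    (qpoch a1 p k * qpoch a2 p k * qpoch a3 p k * qpoch a4 p k)
    / (qpoch b1 p k * qpoch b2 p k * qpoch b3 p k * qpoch p p k) * p ^+ k.
Proof.
move=> hp jN jf hs.
have [hK hhas] := @term_index_spec R p [:: a1; a2; a3; a4] fuel j jf hs.
rewrite /phi43; cbv zeta.
apply: (@sum_ext_zero R (fun k => (qpoch a1 p k * qpoch a2 p k * qpoch a3 p k * qpoch a4 p k)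
    / (qpoch b1 p k * qpoch b2 p k * qpoch b3 p k * qpoch p p k) * p ^+ k)).
  exact: leq_trans hK jN.
move=> k hk.
suff -> : qpoch a1 p k * qpoch a2 p k * qpoch a3 p k * qpoch a4 p k = 0 by rewrite !mul0r.
move: hhas => /hasP [c]; rewrite !inE => /or4P [] /eqP -> /eqP ->;
  by rewrite qpoch_zero // !(mul0r, mulr0).
Qed.

Lemma q_neq0 (R : numClosedFieldType) (q : R) : 0 < q -> q != 0.
Proof. by move=> h; rewrite gt_eqF. Qed.

Lemma powq_inj (R : numClosedFieldType) (q : R) i j : 0 < q -> q < 1 -> q ^+ i = q ^+ j -> i = j.
Proof. by move=> h0 h1; apply: ieexprIn => //; rewrite lt_eqF. Qed.

Lemma one_sub_ne (R : numClosedFieldType) (q : R) i j : 0 < q -> q < 1 -> i != j ->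
  1 - q ^- i * q ^+ j != 0.
Proof.
move=> h0 h1 hij; apply/eqP => h.
have hqi : q ^+ i != 0 by rewrite expf_neq0 // q_neq0.
have := subr0_eq h => h'.
have : q ^+ j = q ^+ i by rewrite -(mulVKf hqi (q ^+ j)) -h' mulr1.
by move/(powq_inj h0 h1)/eqP; rewrite eq_sym (negbTE hij).
Qed.

Lemma one_add_ne (R : numClosedFieldType) (q : R) i j : 0 < q -> 1 - - q ^- i * q ^+ j != 0.
Proof.
move=> h0; rewrite mulNr opprK gt_eqF //.
by rewrite addr_gt0 ?ltr01 // mulr_gt0 ?invr_gt0 ?exprn_gt0.
Qed.

Lemma one_sub_q (R : numClosedFieldType) (q : R) j : 0 < q -> q < 1 -> 1 - q * q ^+ j != 0.
Proof.
move=> h0 h1; rewrite subr_eq0 eq_sym -exprS lt_eqF //.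
by rewrite exprn_ilt1 // ltW.
Qed.

Lemma one_sub_g (R : numClosedFieldType) (q g : R) k j : 0 < q -> g * q ^+ k != q ^- j ->
  1 - g * q ^+ k * q ^+ j != 0.
Proof.
move=> h0 hg; apply/eqP => h; move/eqP: hg; apply.
have hqj : q ^+ j != 0 by rewrite expf_neq0 // q_neq0.
have := subr0_eq h => h'.
by rewrite -[g * q ^+ k](mulfK hqj) -h' mul1r.
Qed.

Lemma qpoch_neq0 (R : numClosedFieldType) (x p : R) k :
  (forall i, (i < k)%N -> 1 - x * p ^+ i != 0) -> qpoch x p k != 0.
Proof. by move=> h; apply/prodf_neq0 => i _; apply: h. Qed.

Lemma core (R : numClosedFieldType) (q g : R) (N n : nat) (z : R) :
  0 < q -> q < 1 -> (0 < N)%N -> (n <= N)%N ->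
  (forall (k j : nat), (1 <= k <= 3)%N -> g * q ^+ k != q ^- j) ->
  z != 0 ->
  (((2 * n).+1 <= N)%N \/ exists2 x, (x <= N)%N & z = q ^- x) ->
  phi43 q (q ^- (2 * n).+1) (q ^- N * q ^- N * q ^+ (2 * n).+1 / q) z (- g * q / z)
    (q ^- N) (- q ^- N) (g * q) (2 * N + 2)
  = (z - g * q / z) / (1 - g * q) *
    phi43 (q ^+ 2) ((q ^+ 2) ^- n) (q ^- N * q ^- N * (q ^+ 2) ^+ n * q) (z ^+ 2)
      (g ^+ 2 * q ^+ 2 / z ^+ 2) (q ^- N * q ^- N) (g * q ^+ 2) (g * q ^+ 3) (2 * N + 2).
Proof.
move=> h0 h1 hN hn hg hz hcase.
have hq : q != 0 := q_neq0 h0.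
have hq2 : q ^+ 2 != 0 by rewrite expf_neq0.
set a := q ^- N.
have hA : forall j, 1 - a * a * (q * q ^+ j * q ^+ j) != 0.
  move=> j; apply: (neq_by (@one_sub_ne _ q (2 * N)%N ((2 * j).+1)%N h0 h1 _)).
    by apply/eqP; lia.
  by rewrite /a exprS !e2 invfM; ring.
have hD : forall k, (k <= N)%N -> DD q g a k != 0.
  move=> k kN; rewrite /DD; apply: mulf_neq0; [apply: mulf_neq0; [apply: mulf_neq0|]|].
  - apply: qpoch_neq0 => i ik; apply: one_sub_ne => //; apply/eqP; lia.
  - by apply: qpoch_neq0 => i ik; apply: one_add_ne.
  - apply: qpoch_neq0 => i ik; have := @one_sub_g _ q g 1 i h0 (hg 1%N i isT).
    by rewrite expr1.
  - by apply: qpoch_neq0 => i ik; apply: one_sub_q.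
have hE : forall k, (k <= N)%N -> EE q g a k != 0.
  move=> k kN; rewrite /EE; apply: mulf_neq0; [apply: mulf_neq0; [apply: mulf_neq0|]|].
  - apply: qpoch_neq0 => i ik.
    apply: (neq_by (@one_sub_ne _ q (2 * N)%N (2 * i)%N h0 h1 _)); first by apply/eqP; lia.
    by rewrite /a p2 !e2 invfM; ring.
  - apply: qpoch_neq0 => i ik; have := @one_sub_g _ q g 2 (2 * i)%N h0 (hg 2%N _ isT).
    by rewrite exprM.
  - apply: qpoch_neq0 => i ik; have := @one_sub_g _ q g 3 (2 * i)%N h0 (hg 3%N _ isT).
    by rewrite exprM.
  - apply: qpoch_neq0 => i ik.
    apply: (neq_by (@one_sub_q _ q ((2 * i).+1)%N h0 h1)).
    by rewrite p2 [q ^+ (2 * i).+1]exprS e2; ring.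
have hal : forall m, (m < 2 * N)%N -> alq q g a m.+1 != 0.
  move=> m hm; rewrite /alq; apply: mulf_neq0; [apply: mulf_neq0|].
  - apply: (neq_by (@one_sub_ne _ q (2 * N)%N m h0 h1 _)); first by apply/eqP; lia.
    rewrite /a exprS !e2 invfM; field; by rewrite hq expf_neq0.
  - apply: (neq_by (@one_sub_g _ q g 1 m.+1 h0 (hg 1%N _ isT))).
    by rewrite expr1 exprS mulrA.
  - rewrite invr_neq0 //; apply: (neq_by (hA m)).
    rewrite exprS; field; by rewrite ?hq ?expf_neq0.
have hc0 : 1 - g * q != 0.
  by have := @one_sub_g _ q g 1 0 h0 (hg 1%N 0%N isT); rewrite expr1 expr0 mulr1.
have eL : phi43 q (q ^- (2 * n).+1) (a * a * q ^+ (2 * n).+1 / q) z (- g * q / z)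
    a (- a) (g * q) (2 * N + 2) = PP q g a z N (2 * n).+1.
  have [j jN hj] : exists2 j, (j <= N)%N & has (fun c => c == q ^- j)
      [:: q ^- (2 * n).+1; a * a * q ^+ (2 * n).+1 / q; z; - g * q / z].
    case: hcase => [h | [x xN ->]]; [exists (2 * n).+1 | exists x] => //=; by rewrite eqxx ?orbT.
  rewrite (@phi43_sum _ _ _ _ _ _ _ _ _ _ N j) //; last by lia.
  by rewrite /PP; apply: eq_bigr => k _; rewrite /NN /DD /ee; ring.
have eR : phi43 (q ^+ 2) ((q ^+ 2) ^- n) (a * a * (q ^+ 2) ^+ n * q) (z ^+ 2)
      (g ^+ 2 * q ^+ 2 / z ^+ 2) (a * a) (g * q ^+ 2) (g * q ^+ 3) (2 * N + 2)
    = QQ q g a z N n.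
  rewrite (@phi43_sum _ _ _ _ _ _ _ _ _ _ N n) //=; last by rewrite eqxx.
    by rewrite /QQ; apply: eq_bigr => k _; rewrite /MM /EE /ff; ring.
  by lia.
rewrite eL eR.
have h1a : 1 - a != 0.
  apply: (neq_by (@one_sub_ne _ q N 0 h0 h1 _)); first by apply/eqP; lia.
  by rewrite expr0 mulr1.
have h2a : 1 - - a != 0 by have := @one_add_ne _ q N 0 h0; rewrite expr0 mulr1.
have h3 : 1 - q != 0 by have := @one_sub_q _ q 0 h0 h1; rewrite expr0 mulr1.
apply: (@induct _ (PP q g a z N) (QQ q g a z N) (z - g * q / z) ((z - g * q / z) / (1 - g * q))
   (1 - g * q) (alq q g a) (deq q g a) n) => //.
- by rewrite PP1 // QQ0 mulr1.
- by rewrite PP0 PP1 // mulr1; field; rewrite hc0 hz.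
- move=> [|m] // _ hm; apply: P_rec => //.
  + by apply: (neq_by (hA m)); ring.
  + case: hcase => [h | [x xN hx]]; [left | right].
      by rewrite /NN qpoch_zero // ?mul0r //; lia.
    by rewrite /ee hx qpoch_zero // ?mul0r.
- move=> _; apply: Q_rec0 => //; left.
  by rewrite /MM qpoch_zero // !mul0r.
- move=> [|n'] // _ hn'; apply: Q_rec => //; left.
  by rewrite /MM qpoch_zero // ?mul0r //; lia.
- move=> n' hn'; apply: mulf_neq0; apply: hal; lia.
Qed.

Theorem mainTheorem10 (R : numClosedFieldType) (q gamma : R) (N n : nat)
  (hq0 : 0 < q) (hq1 : q < 1) (hN : (0 < N)%N) (hn : (n <= N)%N)
  (hgamma : forall (k j : nat), (1 <= k <= 3)%N -> gamma * q ^+ k != q ^- j) :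
  (* case 2n+1 <= N: for every complex x, written via z = q^{-x} (z <> 0),
     so q^{x+1} = q / z, q^{-2x} = z^2, q^{2x+2} = q^2 / z^2 *)
  ((2 * n + 1 <= N)%N ->
    forall z : R, z != 0 ->
      phi43 q (q ^- (2 * n + 1)) (q ^- (2 * (N - n))) z (- gamma * q / z)
              (q ^- N) (- q ^- N) (gamma * q) (2 * N + 2)
      = (z - gamma * q / z) / (1 - gamma * q) *
        phi43 (q ^+ 2) (q ^- (2 * n)) (q ^ ((2 * n)%:Z - (2 * N)%:Z + 1))
              (z ^+ 2) (gamma ^+ 2 * q ^+ 2 / z ^+ 2)
              (q ^- (2 * N)) (gamma * q ^+ 2) (gamma * q ^+ 3) (2 * N + 2))
  /\
  (* case 2n+1 > N: for x in {0,...,N} *)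
  ((N < 2 * n + 1)%N ->
    forall x : nat, (x <= N)%N ->
      phi43 q (q ^- (2 * n + 1)) (q ^- (2 * (N - n))) (q ^- x)
              (- gamma * q ^+ (x + 1))
              (q ^- N) (- q ^- N) (gamma * q) (2 * N + 2)
      = (q ^- x - gamma * q ^+ (x + 1)) / (1 - gamma * q) *
        phi43 (q ^+ 2) (q ^- (2 * n)) (q ^ ((2 * n)%:Z - (2 * N)%:Z + 1))
              (q ^- (2 * x)) (gamma ^+ 2 * q ^+ (2 * x + 2))
              (q ^- (2 * N)) (gamma * q ^+ 2) (gamma * q ^+ 3) (2 * N + 2)).

Proof.
have hq : q != 0 := q_neq0 hq0.
have E1 : q ^- (2 * n + 1) = q ^- (2 * n).+1 :> R.
  by apply: (congr1 (fun k => q ^- k)); exact: addn1.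
have E2 : q ^- (2 * (N - n)) = q ^- N * q ^- N * q ^+ (2 * n).+1 / q.
  have E : q ^+ N * q ^+ N = q ^+ (2 * (N - n))%N * q ^+ (2 * n)%N.
    by rewrite -!exprD; congr (_ ^+ _); lia.
  rewrite -invfM E invfM exprS; field.
  by rewrite hq !expf_neq0.
have E3 : q ^- (2 * n) = (q ^+ 2) ^- n by rewrite -exprM.
have E4 : q ^ ((2 * n)%:Z - (2 * N)%:Z + 1) = q ^- N * q ^- N * (q ^+ 2) ^+ n * q.
  rewrite !expfzDr // ?expr1z -exprnP -exprnN p2 !e2 invfM; ring.
have E5 : q ^- (2 * N) = q ^- N * q ^- N by rewrite e2 invfM.
split.
  move=> h2n z hz.
  rewrite E1 E2 E3 E4 E5.
  apply: core => //; left; by rewrite -addn1.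
move=> h2n x xN.
have hx : q ^- x != 0 by rewrite invr_neq0 // expf_neq0.
have G1 : q ^+ (x + 1) = q / q ^- x.
  rewrite invrK -exprS; congr (_ ^+ _); exact: addn1.
have G2 : q ^- (2 * x) = (q ^- x) ^+ 2 by rewrite e2 invfM expr2.
have G3 : q ^+ (2 * x + 2) = q ^+ 2 / (q ^- x) ^+ 2.
  rewrite exprD e2; field; by rewrite expf_neq0.
rewrite E1 E2 E3 E4 E5 G1 G2 G3.
rewrite [- gamma * (_ / _)]mulrA [gamma * (q / _)]mulrA [gamma ^+ 2 * (_ / _)]mulrA.
apply: core => //; right; exists x => //.
Qed.
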